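(* Let $d\ge1$, $k\ge d+2$ and $\alpha\in(0,1)$. Then there exist absolutely continuous probability measures $\mu_1,\dots,\mu_k$ on $\mathbb R^d$ such that there is no convex set $C\subset\mathbb R^d$ with $\mu_1(C)=\dots=\mu_k(C)=\alpha$. *)

(* Defs.v *)
From Stdlib Require Import Reals Lra Lia.
From Stdlib Require Vectors.Fin.
Open Scope R_scope.

Definition point (d : nat) := Fin.t d -> R.
Definition rset (d : nat) := point d -> Prop.

(* Open sets (sup-norm balls; same topology as the Euclidean one). *)
Definition is_open {d : nat} (U : rset d) : Prop :=
  forall x, U x -> exists r, 0 < r /\
    forall y : point d, (forall i, Rabs (y i - x i) < r) -> U y.

Inductive borel {d : nat} : rset d -> Prop :=
| borel_open : forall U, is_open U -> borel U
| borel_compl : forall A, borel A -> borel (fun x => ~ A x)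
| borel_cunion : forall A : nat -> rset d, (forall n, borel (A n)) ->
    borel (fun x => exists n, A n x).

(* Lebesgue null sets: coverable by countably many closed cubes
   (center c n, half-side r n) of total volume (2 r n)^d at most eps. *)
Definition lebesgue_null {d : nat} (N : rset d) : Prop :=
  forall eps, 0 < eps -> exists (c : nat -> point d) (r : nat -> R),
    (forall n, 0 <= r n) /\
    (forall m, sum_f_R0 (fun n => (2 * r n) ^ d) m <= eps) /\
    (forall x, N x -> exists n, forall i, Rabs (x i - c n i) <= r n).

(* Lebesgue measurable sets: Borel up to a null set (the completion). *)
Definition lebesgue_measurable {d : nat} (A : rset d) : Prop :=
  exists B N, borel B /\ lebesgue_null N /\
    forall x, ~ N x -> (A x <-> B x).

(* A probability measure on the Lebesgue sigma-algebra of R^d,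
   given as a set function (values on non-measurable sets are irrelevant). *)
Definition is_probability_measure {d : nat} (mu : rset d -> R) : Prop :=
  (forall A, lebesgue_measurable A -> 0 <= mu A) /\
  mu (fun _ => True) = 1 /\
  (forall A : nat -> rset d,
     (forall n, lebesgue_measurable (A n)) ->
     (forall m n x, m <> n -> A m x -> A n x -> False) ->
     Un_cv (fun m => sum_f_R0 (fun n => mu (A n)) m)
           (mu (fun x => exists n, A n x))).

Definition abs_continuous {d : nat} (mu : rset d -> R) : Prop :=
  forall N : rset d, lebesgue_null N -> mu N = 0.

Definition ac_probability_measure {d : nat} (mu : rset d -> R) : Prop :=
  is_probability_measure mu /\ abs_continuous mu.

Definition convex {d : nat} (C : rset d) : Prop :=
  forall x y : point d, C x -> C y -> forall t, 0 <= t <= 1 ->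
    C (fun i => t * x i + (1 - t) * y i).

(* Main.v *)
Require Import Defs.
From Stdlib Require Import Reals.
Open Scope R_scope.
From HB Require Import structures.
From mathcomp Require all_boot all_order all_algebra all_classical all_reals all_analysis measurable_realfun.
From mathcomp Require Rstruct Rstruct_topology.
From mathcomp Require ring lra.

Module MC.
Import all_boot all_order all_algebra all_classical all_reals all_analysis measurable_realfun Rstruct Rstruct_topology.
Import ring lra.
Set Implicit Arguments. Unset Strict Implicit. Unset Printing Implicit Defensive.
Import Order.TTheory GRing.Theory Num.Theory.
Import numFieldNormedType.Exports.
Local Open Scope classical_set_scope.
Local Open Scope ring_scope.
Local Notation T := (measurableTypeR R).

Definition U01 : probability T R := uniform_prob (@ltr01 R).
Lemma U01_le (A : set T) : measurable A -> (U01 A <= lebesgue_measure A)%E.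
Proof.
move=> mA; rewrite /U01 /uniform_prob.
apply: (@le_trans _ _ (\int[lebesgue_measure]_(x in A) (cst 1%E x))%E).
  apply: ge0_le_integral => //=.
  - by move=> x _; rewrite lee_fin uniform_pdf_ge0.
  - by apply/measurable_EFinP/measurable_funTS; exact: measurable_uniform_pdf.
  - move=> x _; rewrite lee_fin /uniform_pdf; case: ifPn => _; last by [].
    by rewrite subr0 invr1.
by rewrite integral_cst//= mul1e.
Qed.
Lemma U01_itv (a r : R) : 0 <= r -> (U01 `[a, (a + r)%R]%classic <= r%:E)%E.
Proof.
move=> r0; apply: le_trans (U01_le (measurable_itv _)) _.
rewrite lebesgue_measure_itv /= lte_fin.
case: ifPn => _; last by rewrite lee_fin.
by rewrite -EFinD addrAC subrr add0r.
Qed.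
Lemma U01_01 : U01 `[0, 1]%classic = 1%E.
Proof. exact: (@integral_uniform_pdf1 R 0 1 `[0, 1]%classic (@ltr01 R) (@subset_refl _ _)). Qed.

Section push.
Context d1 d2 (T1 : measurableType d1) (T2 : measurableType d2).
Variables (P : subprobability T1 R) (f : T1 -> T2) (mf : measurable_fun setT f).
Definition pushS (mf' : measurable_fun setT f) : set T2 -> \bar R := fun A => P (f @^-1` A).
Let p0 : pushS mf set0 = 0%E.
Proof. by rewrite /pushS preimage_set0 measure0. Qed.
Let p1 A : (0 <= pushS mf A)%E.
Proof. exact: measure_ge0. Qed.
Let p2 : semi_sigma_additive (pushS mf).
Proof.
move=> F mF tF mUF; rewrite /pushS preimage_bigcup.
apply: measure_semi_sigma_additive.
- by move=> n; rewrite -[X in measurable X]setTI; exact: mf.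
- apply/trivIsetP => /= i j _ _ ij; rewrite -preimage_setI.
  by move/trivIsetP : tF => /(_ _ _ _ _ ij) ->//; rewrite preimage_set0.
- by rewrite -preimage_bigcup -[X in measurable X]setTI; exact: mf.
Qed.
HB.instance Definition _ := isMeasure.Build _ _ _ (pushS mf) p0 p1 p2.
Let p3 : (pushS mf setT <= 1)%E.
Proof. rewrite /pushS preimage_setT; exact: sprobability_setT. Qed.
HB.instance Definition _ := Measure_isSubProbability.Build _ _ _ (pushS mf) p3.
End push.

Definition consf n (p : T * n.-tuple T) : n.+1.-tuple T := [tuple of p.1 :: p.2].
Lemma mconsf n : measurable_fun setT (@consf n).
Proof. by apply: measurable_cons. Qed.
Fixpoint muT n : subprobability (n.-tuple T) R :=
  match n with
  | 0 => \d_([tuple] : 0.-tuple T)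
  | n'.+1 => pushS (product_subprobability (U01 : subprobability T R, muT n')) (@mconsf n')
  end.

Lemma muTS n (A : set (n.+1.-tuple T)) :
  muT n.+1 A = (U01 \x muT n)%E (@consf n @^-1` A).
Proof. by []. Qed.

Definition box n (a : nat -> R) (r : R) : set (n.-tuple T) :=
  [set t | forall i : 'I_n, a i <= tnth t i <= a i + r].
Arguments box : clear implicits.

Lemma box_meas n a r : measurable (box n a r).
Proof.
have -> : box n a r = \bigcap_(i in [set: 'I_n]) ((fun t => tnth t i) @^-1` `[a i, a i + r]%classic).
  apply/seteqP; split => t /=.
    by move=> H i _; rewrite /= in_itv /=; exact: H.
  by move=> H i; have := H i I; rewrite /= in_itv /=.
apply: fin_bigcap_measurable => //.
move=> i _; rewrite -[X in measurable X]setTI.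
exact: (@measurable_tnth _ T n i) _ (measurable_itv _).
Qed.

Lemma consf_box n a r :
  @consf n @^-1` box n.+1 a r = `[a 0%N, a 0%N + r]%classic `*` box n (fun i => a i.+1) r.
Proof.
apply/seteqP; split => -[x t] /=.
  move=> H; split.
    by have := H ord0; rewrite /= in_itv /= (tnth_nth x) /=.
  move=> i; have := H (lift ord0 i).
  by rewrite (tnth_nth x) (tnth_nth x t) /=.
rewrite in_itv /= => -[H1 H2] [[|i] Hi]; rewrite (tnth_nth x) /=.
  by [].
by have := H2 (Ordinal (Hi : (i < n)%N)); rewrite (tnth_nth x t).
Qed.

Lemma muT_box n a r : 0 <= r -> (muT n (box n a r) <= (r ^+ n)%:E)%E.
Proof.
move=> r0; elim: n a => [|n IH] a.
  by rewrite /= /dirac expr0 indicE; case: (_ \in _); rewrite lee_fin.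
rewrite muTS consf_box product_measure1E; last 2 first.
- exact: measurable_itv.
- exact: box_meas.
rewrite exprS EFinM; apply: lee_pmul => //.
- exact: U01_itv.
- exact: IH.
Qed.

Lemma muT_cube n : muT n (box n (fun=> 0) 1) = 1%E.
Proof.
elim: n => [|n IH].
  have H0 : ([tuple] : 0.-tuple T) \in box 0 (fun=>0) 1 by apply/mem_set => -[].
  by rewrite /= /dirac indicE H0.
rewrite muTS consf_box product_measure1E; last 2 first.
- exact: measurable_itv.
- exact: box_meas.
rewrite add0r /= (_ : muT n _ = 1%E); last exact: IH.
rewrite mule1; exact: U01_01.
Qed.

Lemma muT_setT n : muT n setT = 1%E.
Proof.
elim: n => [|n IH].
  by rewrite /= /dirac indicE in_setT.
rewrite muTS preimage_setT -setXTT product_measure1E //.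
rewrite /= (_ : muT n _ = 1%E); last exact: IH.
rewrite mule1; exact: probability_setT.
Qed.

Lemma muT_ncube n : muT n (~` box n (fun=> 0) 1) = 0%E.
Proof.
rewrite -[~` _]setTD measureD //; last 2 first.
- exact: box_meas.
- by apply: (@le_lt_trans _ _ 1%E); [exact: sprobability_setT | exact: ltry].
rewrite setTI -(subee (x:=1%E)) //.
by congr (_ - _)%E; [exact: muT_setT | exact: muT_cube].
Qed.

Section outer.
Variable n : nat.
Local Notation P := (muT n).
Definition out (S : set (n.-tuple T)) : \bar R :=
  ereal_inf [set P M | M in [set M | measurable M /\ S `<=` M]].

Lemma out_le S M : measurable M -> S `<=` M -> (out S <= P M)%E.
Proof. by move=> mM SM; apply: ereal_inf_lbound; exists M. Qed.

Lemma out_ge S x : (forall M, measurable M -> S `<=` M -> (x <= P M)%E) -> (x <= out S)%E.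
Proof. by move=> H; apply: le_ereal_inf_tmp => _ [M [mM SM] <-]; exact: H. Qed.

Lemma out_ge0 S : (0 <= out S)%E.
Proof. by apply: out_ge => M mM _; exact: measure_ge0. Qed.

Lemma out_le1 S : (out S <= 1)%E.
Proof. apply: le_trans (out_le measurableT (@subsetT _ S)) _; exact: sprobability_setT. Qed.

Lemma out_fin S : (fine (out S))%:E = out S.
Proof.
apply: fineK; rewrite ge0_fin_numE ?out_ge0 //.
exact: le_lt_trans (out_le1 S) (ltry _).
Qed.

Lemma out_ae S B Z : measurable B -> P.-negligible Z ->
  (forall t, ~ Z t -> (S t <-> B t)) -> out S = P B.
Proof.
move=> mB [N [mN PN0 ZN]] SB.
apply/eqP; rewrite eq_le; apply/andP; split.
  have mBN : measurable (B `|` N) by exact: measurableU.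
  apply: le_trans (@out_le S (B `|` N) mBN _) _.
    move=> t St; have [Zt|nZt] := pselect (Z t); first by right; exact: ZN.
    by left; apply/(SB t nZt).
  apply: le_trans (@measureU2 _ _ _ (muT n) _ _ mB mN) _.
  by change (P B + P N <= P B)%E; rewrite PN0 adde0.
apply: out_ge => M mM SM.
apply: le_trans (le_measure _ _ _ (_ : B `<=` M `|` N)) _.
- by rewrite inE.
- by rewrite inE; exact: measurableU.
- move=> t Bt; have [Zt|nZt] := pselect (Z t); first by right; exact: ZN.
  by left; apply: SM; apply/(SB t nZt).
apply: le_trans (@measureU2 _ _ _ (muT n) _ _ mM mN) _.
by change (P M + P N <= P M)%E; rewrite PN0 adde0.
Qed.

Lemma out_meas M : measurable M -> out M = P M.
Proof.
move=> mM; apply: (out_ae (Z := set0)) => //.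
by exists set0; split => //; exact: measure0.
Qed.

End outer.

Lemma series_le (g : nat -> R) (e : R) : (forall i, 0 <= g i) ->
  (forall m, \sum_(0 <= i < m) g i <= e) -> (\sum_(i <oo) (g i)%:E <= e%:E)%E.
Proof.
move=> g0 H.
apply: lime_le.
  apply: is_cvg_nneseries => i _ _. rewrite lee_fin. exact (g0 i).
apply: nearW => m. rewrite sumEFin lee_fin. exact (H m).
Qed.

Section emb.
Variable d : nat.
Definition f2o (i : Fin.t d) : 'I_d := Ordinal (introT ssrnat.ltP (proj2_sig (Fin.to_nat i))).
Definition emb (p : Defs.point d) (s : R) (t : d.-tuple T) : Defs.point d :=
  fun i => p i + s * tnth t (f2o i).
Definition pre (p : Defs.point d) (s : R) (A : rset d) : set (d.-tuple T) :=
  [set t | A (emb p s t)].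

Lemma f2o_of (j : 'I_d) : f2o (Fin.of_nat_lt (elimT ssrnat.ltP (ltn_ord j))) = j.
Proof. by apply: val_inj; rewrite /= Fin.to_nat_of_nat. Qed.

Variables (p : Defs.point d) (s : R).
Hypothesis s0 : 0 < s.

Lemma pre_open (U : rset d) : is_open U -> measurable (pre p s U).
Proof.
move=> oU.
pose G := fun k : (d.-tuple int * nat)%type =>
  let c := (k.2.+1%:R : R)^-1 in
  let B := box d (fun j => (nth 0 k.1 j)%:~R * c) c in
  if `[< B `<=` pre p s U >] then B else set0.
have -> : pre p s U = \bigcup_k G k.
  apply/seteqP; split; last first.
    move=> t [k _]; rewrite /G; case: asboolP => // H; exact: H.
  move=> t Ut.
  have [r [r0 Hr]] := oU _ Ut.
  have r0' : 0 < r by apply/RltP.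
  pose m := Num.trunc (s / r).
  have hm : s / r < m.+1%:R by exact: truncnS_gt.
  pose c := (m.+1%:R : R)^-1.
  have c0 : 0 < c by rewrite invr_gt0.
  have sc : s * c < r.
    rewrite ltr_pdivrMr // in hm.
    by rewrite /c ltr_pdivrMr ?ltr0n // mulrC.
  pose z := [tuple Num.floor (tnth t i / c) | i < d].
  exists (z, m) => //.
  have Bt : box d (fun j => (nth 0 z j)%:~R * c) c t.
    move=> i; rewrite -tnth_nth tnth_mktuple.
    have /andP[h1 h2] := floor_itv (tnth t i / c).
    rewrite -ler_pdivlMr // h1 /=.
    rewrite intrD1 in h2.
    rewrite (_ : _ * c + c = ((Num.floor (tnth t i / c))%:~R + 1) * c); last by rewrite mulrDl mul1r.
    by rewrite -ler_pdivrMr //; apply: ltW.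
  rewrite /G /=; case: asboolP => [_|]; first exact: Bt.
  case; move=> t' Bt0.
  have Bt' : box d (fun j => (nth 0 z j)%:~R * c) c t' := Bt0.
  rewrite /pre /=; apply: Hr => i.
  apply/RltP; rewrite /emb.
  have := Bt (f2o i); have := Bt' (f2o i).
  set a := _ * c; set x := tnth t _; set y := tnth t' _.
  move=> /andP[h1 h2] /andP[h3 h4].
  have hxy : `|y - x| <= c.
    by rewrite ler_norml; apply/andP; split; lra.
  change (`|(p i + s * y) - (p i + s * x)| < r).
  rewrite (_ : p i + s * y - (p i + s * x) = s * (y - x)); last by ring.
  rewrite normrM gtr0_norm //.
  apply: le_lt_trans sc; exact (ler_wpM2l (ltW s0) hxy).
apply: countable_bigcupT_measurable; first exact: countableP.
move=> k; rewrite /G; case: asboolP => _ //; exact: box_meas.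
Qed.

Lemma pre_borel (A : rset d) : borel A -> measurable (pre p s A).
Proof.
elim => {A}.
- by move=> U oU; exact: pre_open.
- move=> A _ mA; exact (measurableC mA).
- move=> A _ mA; rewrite (_ : pre p s _ = \bigcup_n pre p s (A n)).
    exact: bigcupT_measurable.
  by apply/seteqP; split => t /=; [move=> [n h]; exists n | move=> [n _ h]; exists n].
Qed.

End emb.

Lemma sumf_big (f : nat -> R) m : sum_f_R0 f m = \sum_(0 <= i < m.+1) f i.
Proof.
elim: m => [|m IH]; first by rewrite big_nat1.
by rewrite big_nat_recr //= -IH.
Qed.

Lemma aux_box (P x C rr s : R) : 0 < s -> `|P + s * x - C| <= rr ->
  (C - rr - P) / s <= x <= (C - rr - P) / s + 2 * rr / s.
Proof.
move=> s0; rewrite ler_norml => /andP[h1 h2].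
rewrite -mulrDl ler_pdivrMr // ler_pdivlMr //.
have -> : x * s = s * x by rewrite mulrC.
apply/andP; split; lra.
Qed.

Lemma f2o_val d j (h : (j < d)%coq_nat) : nat_of_ord (f2o (Fin.of_nat_lt h)) = j.
Proof. by rewrite /= Fin.to_nat_of_nat. Qed.

Lemma IZR2 : IZR 2 = 2%:R :> R.
Proof. by rewrite IZRposE INRE. Qed.

Section null.
Variable d : nat.
Variables (p : Defs.point d) (s : R).
Hypothesis s0 : 0 < s.

Lemma pre_null_key (N : rset d) : lebesgue_null N -> forall k : nat,
  exists M, measurable M /\ pre p s N `<=` M /\ (muT d M <= (k.+1%:R^-1)%:E)%E.
Proof.
move=> HN k.
pose eps := s ^+ d / k.+1%:R.
have eps0 : 0 < eps by rewrite divr_gt0 // exprn_gt0.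
have [c [r [r0 [rsum cov]]]] := HN eps (elimT RltP eps0).
pose a n j := match Compare_dec.lt_dec j d with
  | left h => (c n (Fin.of_nat_lt h) - r n - p (Fin.of_nat_lt h)) / s
  | right _ => 0 end.
pose F n := box d (a n) (2 * r n / s).
exists (\bigcup_n F n); split; first by apply: bigcupT_measurable => n; exact: box_meas.
split.
  move=> t Nt; have [n Hn] := cov _ Nt; exists n => // j.
  rewrite /a; case: Compare_dec.lt_dec => [h|]; last by move/(_ (elimT ssrnat.ltP (ltn_ord j))).
  have Hj := Hn (Fin.of_nat_lt h).
  have ej : f2o (Fin.of_nat_lt h) = j by apply: val_inj; exact: f2o_val.
  have := Hj; rewrite /emb ej => Hj'.
  apply: aux_box => //.
  apply/RleP; exact Hj'.
have mF n : measurable (F n) by exact: box_meas.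
apply: le_trans (measure_sigma_subadditive _ mF (bigcupT_measurable _ mF) (@subset_refl _ _)) _.
apply: (@le_trans _ _ (\sum_(n <oo) ((2 * r n / s) ^+ d)%:E)%E).
  apply: lee_nneseries; first by move=> n _ _; exact: measure_ge0.
  move=> n _; apply: muT_box; apply: divr_ge0 => //; last exact: ltW.
  by apply: mulr_ge0; [apply/RleP; left; exact Rlt_R0_R2 | apply/RleP; exact (r0 n)].
apply: series_le => [i|m].
  apply: exprn_ge0; apply: divr_ge0; last exact: ltW.
  by apply: mulr_ge0; [apply/RleP; left; exact Rlt_R0_R2 | apply/RleP; exact (r0 i)].
have sd : 0 < s ^+ d by exact: exprn_gt0.
have -> : k.+1%:R^-1 = eps / s ^+ d.
  by rewrite /eps mulrAC divff ?gt_eqF // mul1r.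
under eq_bigr do rewrite expr_div_n.
rewrite -mulr_suml ler_pM2r ?invr_gt0 //.
case: m => [|m]; first by rewrite big_geq // ltW.
rewrite -sumf_big.
have := rsum m.
move/RleP; apply: le_trans.
apply/RleP; apply: Req_le; congr sum_f_R0; apply: funext => n.
by rewrite RpowE.
Qed.

Lemma pre_null (N : rset d) : lebesgue_null N -> (muT d).-negligible (pre p s N).
Proof.
move=> HN; have key := pre_null_key HN.
case: (choice key) => M HM.
have mM k : measurable (M k) by case: (HM k).
exists (\bigcap_k M k); split.
- exact: bigcapT_measurable.
- apply/eqP; rewrite eq_le measure_ge0 andbT.
  apply/lee_addgt0Pr => e e0; rewrite add0e.
  pose k := Num.trunc (e^-1).
  have hk : e^-1 < k.+1%:R by exact: truncnS_gt.
  have hk' : k.+1%:R^-1 <= e.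
    rewrite -div1r ler_pdivrMr // mulrC; apply: ltW.
    by rewrite -ltr_pdivrMr // div1r.
  apply: (@le_trans _ _ (muT d (M k))).
    apply: le_measure; rewrite ?inE //; first exact: bigcapT_measurable.
    exact: bigcap_inf.
  refine (le_trans (HM k).2.2 _); by rewrite lee_fin.
- by move=> t Nt k _; exact: (HM k).2.1.
Qed.

End null.

Lemma cvg_Un_cv (u : nat -> R) (l : R) :
  (fun n => \sum_(0 <= i < n) u i) @ \oo --> l ->
  Un_cv (fun m => sum_f_R0 u m) l.
Proof.
move=> Hc eps eps0; have H := proj1 (@cvgrPdist_lt _ R^o _ _ eventually_filter _ _) Hc.
have [N _ HN] := H eps (introT RltP eps0).
exists N => n Hn.
have : (N <= n.+1)%N by apply: leq_trans (leqnSn n); exact/ssrnat.leP.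
move/HN => /= h.
rewrite /R_dist sumf_big.
apply/RltP; change (`|\sum_(0 <= i < n.+1) u i - l| < eps).
by rewrite distrC.
Qed.

Section mu.
Variable d : nat.
Variables (p : Defs.point d) (s : R).
Hypothesis s0 : 0 < s.

Definition mu (A : rset d) : R := fine (out (pre p s A)).

Lemma mu_E A : (mu A)%:E = out (pre p s A).
Proof. exact: out_fin. Qed.

Lemma mu_ge0 A : (0 <= mu A)%coqR.
Proof. apply/RleP; apply: fine_ge0; exact: out_ge0. Qed.

Lemma mu_setT : mu (fun _ => True) = 1%coqR.
Proof.
rewrite /mu (_ : pre p s _ = setT) //.
by rewrite out_meas // muT_setT.
Qed.

Lemma out_null N : lebesgue_null N -> out (pre p s N) = 0%E.
Proof.
move=> HN; have [M [mM M0 NM]] := @pre_null d p s s0 N HN.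
apply/eqP; rewrite eq_le out_ge0 andbT.
refine (le_trans (out_le mM NM) _).
by change (muT d M <= 0)%E; rewrite M0.
Qed.

Lemma mu_null N : lebesgue_null N -> mu N = 0%coqR.
Proof. by move=> HN; rewrite /mu out_null. Qed.

Lemma mu_pos C : (0 < mu C)%coqR ->
  exists y, C y /\ forall i, (p i <= y i <= p i + s)%coqR.
Proof.
move=> Hpos; case: (pselect (exists y, C y /\ forall i, (p i <= y i <= p i + s)%coqR)) => // Hn.
exfalso.
have sub : pre p s C `<=` ~` box d (fun=> 0) 1.
  move=> t Ct Bt; apply: Hn; exists (emb p s t); split => // i.
  have /andP[h1 h2] := Bt (f2o i).
  rewrite /emb; split; apply/RleP.
    by rewrite lerDl; exact (mulr_ge0 (ltW s0) h1).
  rewrite lerD2l; rewrite add0r in h2.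
  by rewrite -[leRHS]mulr1; exact (ler_wpM2l (ltW s0) h2).
have h0 : out (pre p s C) = 0%E.
  apply/eqP; rewrite eq_le out_ge0 andbT.
  have mC : measurable (~` box d (fun=> 0) 1) by apply: measurableC; exact: box_meas.
  refine (le_trans (out_le mC sub) _).
  by change (muT d (~` box d (fun=> 0%R) 1%R) <= 0)%E; rewrite muT_ncube.
move: Hpos; rewrite /mu h0 /=; exact: Rlt_irrefl.
Qed.

Lemma mu_full C : (forall y, (forall i, (p i <= y i <= p i + s)%coqR) -> C y) ->
  mu C = 1%coqR.
Proof.
move=> HC.
have sub : box d (fun=> 0) 1 `<=` pre p s C.
  move=> t Bt; apply: HC => i.
  have /andP[h1 h2] := Bt (f2o i).
  rewrite /emb; split; apply/RleP.
    by rewrite lerDl; exact (mulr_ge0 (ltW s0) h1).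
  rewrite lerD2l; rewrite add0r in h2.
  by rewrite -[leRHS]mulr1; exact (ler_wpM2l (ltW s0) h2).
have h1 : out (pre p s C) = 1%E.
  apply/eqP; rewrite eq_le out_le1 /=.
  apply: out_ge => M mM CM.
  rewrite -(muT_cube d); apply: le_measure; rewrite ?inE //; first exact: box_meas.
  exact: subset_trans sub CM.
by rewrite /mu h1.
Qed.

End mu.

Section mu2.
Variable d : nat.
Variables (p : Defs.point d) (s : R).
Hypothesis s0 : 0 < s.
Local Notation mu := (mu p s).

Lemma mu_additive (A : nat -> rset d) : (forall n, lebesgue_measurable (A n)) ->
  (forall m n x, m <> n -> A m x -> A n x -> False) ->
  Un_cv (fun m => sum_f_R0 (fun n => mu (A n)) m) (mu (fun x => exists n, A n x)).
Proof.
move=> HA Hdis.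
have HA' : forall n, exists BN : rset d * rset d, borel BN.1 /\ lebesgue_null BN.2 /\
    forall x, ~ BN.2 x -> (A n x <-> BN.1 x).
  by move=> n; case: (HA n) => B [N H]; exists (B, N).
case: (choice HA') => BN HBN.
have negZ : (muT d).-negligible (\bigcup_n pre p s (BN n).2).
  by apply: negligible_bigcup => n; exact: (@pre_null d p s s0 _ (HBN n).2.1).
case: negZ => M0 [mM0 M00 ZM0].
pose B' n := pre p s (BN n).1 `\` M0.
have mB' n : measurable (B' n).
  by apply: measurableD => //; exact: (@pre_borel d p s s0 _ (HBN n).1).
have negM0 : (muT d).-negligible M0 by exists M0; split => // t.
have key n t : ~ M0 t -> (pre p s (A n) t <-> B' n t).
  move=> nt; have nN : ~ (BN n).2 (emb p s t).
    by move=> h; apply: nt; apply: ZM0; exists n.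
  rewrite /B' /pre /=; split.
    by move=> h; split => //; apply/((HBN n).2.2 _ nN).
  by case=> h _; apply/((HBN n).2.2 _ nN).
have eA n : out (pre p s (A n)) = muT d (B' n).
  exact (out_ae (mB' n) negM0 (key n)).
have keyU : forall t, ~ M0 t ->
    (pre p s (fun x => exists n, A n x) t <-> (\bigcup_n B' n) t).
  move=> t nt; split.
    by case=> n h; exists n => //; apply/(key n t nt).
  by case=> n _ h; exists n; apply/(key n t nt).
have eU : out (pre p s (fun x => exists n, A n x)) = muT d (\bigcup_n B' n).
  exact (out_ae (bigcupT_measurable _ mB') negM0 keyU).
have tB : trivIset setT B'.
  apply/trivIsetP => i j _ _ ij; apply/seteqP; split => // t [h1 h2].
  have nt : ~ M0 t by case: h1.
  have a1 := (key i t nt).2 h1; have a2 := (key j t nt).2 h2.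
  by exfalso; apply: (Hdis i j _ _ a1 a2); move/eqP: ij.
have hc := @measure_sigma_additive _ _ _ (muT d) B' mB' tB.
apply: cvg_Un_cv.
have e1 : (fun n => \sum_(0 <= i < n) muT d (B' i)) = (fun n => (\sum_(0 <= i < n) mu (A i))%:E).
  apply: funext => n; rewrite -sumEFin; apply: eq_bigr => i _.
  by rewrite mu_E eA.
have e2 : muT d (\bigcup_n B' n) = (mu (fun x => exists n, A n x))%:E by rewrite mu_E eU.
have hc' : (fun n => (\sum_(0 <= i < n) mu (A i))%:E) @ \oo --> (mu (fun x => exists n, A n x))%:E.
  rewrite -e1 -e2; exact hc.
move: hc' => /fine_cvgP [_].
by rewrite (_ : fine \o _ = fun n => \sum_(0 <= i < n) mu (A i)).
Qed.

Lemma mu_ac : ac_probability_measure mu.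
Proof.
split; [split; [|split] | ].
- by move=> A _; exact: mu_ge0.
- exact: mu_setT.
- exact: mu_additive.
- by move=> N HN; exact: mu_null.
Qed.
End mu2.

Definition MU d (p : Defs.point d) (s : R) : rset d -> R := mu p s.
Lemma mu_ac_S d (p : Defs.point d) (s : R) : (0 < s)%coqR -> ac_probability_measure (MU p s).
Proof. by move=> h; apply: mu_ac; apply/RltP. Qed.
Lemma mu_pos_S d (p : Defs.point d) (s : R) (C : rset d) : (0 < s)%coqR -> (0 < MU p s C)%coqR ->
  exists y, C y /\ forall i, (p i <= y i <= p i + s)%coqR.
Proof. by move=> h; apply: mu_pos; apply/RltP. Qed.
Lemma mu_full_S d (p : Defs.point d) (s : R) (C : rset d) : (0 < s)%coqR ->
  (forall y, (forall i, (p i <= y i <= p i + s)%coqR) -> C y) -> MU p s C = 1%coqR.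
Proof. by move=> h; apply: mu_full; apply/RltP. Qed.
Arguments MU : clear implicits.
End MC.

From Stdlib Require Import Lra Lia FunctionalExtensionality ClassicalEpsilon Arith.
From Stdlib Require Vectors.Fin.

Section geom.
Variable d : nat.
Variable C : rset d.
Hypothesis Cconv : convex C.
Variable x : point d.
Hypothesis Hx : forall i, 1 <= x i <= 2.

Definition idx (i : Fin.t d) : nat := proj1_sig (Fin.to_nat i).
Definition LL : R := 4 * INR d + 14.
Definition lo (k : nat) : R := LL - 4 * INR k.

Definition Inv k (w0 : point d) (W : nat -> point d) : Prop :=
  C w0 /\ (forall j, (k < j <= d)%nat -> C (W j)) /\
  (forall i, (idx i < k)%nat -> w0 i = x i) /\
  (forall j i, (k < j <= d)%nat -> (idx i < k)%nat -> W j i = x i) /\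
  (forall i, (k <= idx i)%nat -> -1/2 <= w0 i <= 1/2) /\
  (forall j i, (k < j <= d)%nat -> (k <= idx i)%nat -> S (idx i) <> j -> -1/2 <= W j i <= 1/2) /\
  (forall j i, (k < j <= d)%nat -> S (idx i) = j -> lo k <= W j i).

Lemma idx_lt i : (idx i < d)%nat.
Proof. unfold idx; destruct (Fin.to_nat i); simpl; lia. Qed.

Lemma idx_inj i i' : idx i = idx i' -> i = i'.
Proof.
  intros H. rewrite <- (Fin.of_nat_to_nat_inv i), <- (Fin.of_nat_to_nat_inv i').
  unfold idx in H. revert H.
  destruct (Fin.to_nat i) as [a Ha], (Fin.to_nat i') as [b Hb]; simpl; intros ->.
  apply Fin.of_nat_ext.
Qed.

Lemma lo_S k : lo (S k) = lo k - 4.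
Proof. unfold lo; rewrite S_INR; ring. Qed.

Lemma lo_big k : (k < d)%nat -> 18 <= lo k.
Proof.
  intros H; unfold lo, LL.
  assert (INR k + 1 <= INR d) by (rewrite <- S_INR; apply le_INR; lia).
  lra.
Qed.

Lemma cc_range (t u v lo0 hi : R) : 0 <= t <= 1 -> lo0 <= u <= hi -> lo0 <= v <= hi ->
  lo0 <= (1 - t) * u + (1 - (1 - t)) * v <= hi.
Proof. intros Ht Hu Hv; split; nra. Qed.

Lemma step k w0 W : (k < d)%nat -> Inv k w0 W -> exists w0' W', Inv (S k) w0' W'.
Proof.
  intros Hk [C0 [CW [X0 [XW [R0 [RW MW]]]]]].
  set (ik := Fin.of_nat_lt Hk).
  assert (Hik : idx ik = k) by (unfold idx, ik; rewrite Fin.to_nat_of_nat; reflexivity).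
  set (P := W (S k)).
  assert (HkS : (k < S k <= d)%nat) by lia.
  assert (Pmain : lo k <= P ik) by (apply MW; [exact HkS | rewrite Hik; reflexivity]).
  assert (Hlo := lo_big k Hk).
  assert (Xik := Hx ik).
  set (tt := fun a : point d => (x ik - a ik) / (P ik - a ik)).
  set (comb := fun a : point d => fun i => (1 - tt a) * a i + (1 - (1 - tt a)) * P i).
  assert (Hcomb : forall a : point d, -1/2 <= a ik <= 1/2 ->
    0 <= tt a <= 1 /\ comb a ik = x ik /\ tt a * (lo k - 1/2) <= 5/2).
  { intros a Ha.
    assert (Hpos : 0 < P ik - a ik) by lra.
    assert (Htt : tt a * (P ik - a ik) = x ik - a ik)
      by (unfold tt; field; lra).
    assert (T0 : 0 <= tt a).
    { unfold tt; apply Rmult_le_pos; [lra | left; apply Rinv_0_lt_compat; lra]. }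
    assert (T1 : tt a <= 1).
    { destruct (Rle_or_lt (tt a) 1) as [h|h]; [exact h|]. exfalso. nra. }
    split; [lra|]. split.
    - unfold comb. replace (1 - (1 - tt a)) with (tt a) by ring.
      assert (tt a * P ik - tt a * a ik = x ik - a ik) by (rewrite <- Htt; ring).
      lra.
    - assert (tt a * (lo k - 1/2) <= tt a * (P ik - a ik)) by (apply Rmult_le_compat_l; lra).
      lra. }
  assert (HC : forall a, C a -> -1/2 <= a ik <= 1/2 -> C (comb a)).
  { intros a Ca Ha. destruct (Hcomb a Ha) as [Ht _].
    unfold comb. apply Cconv; [exact Ca | apply CW; exact HkS | lra]. }
  assert (Hlt : forall a : point d, -1/2 <= a ik <= 1/2 -> (forall i, (idx i < k)%nat -> a i = x i) ->
     forall i, (idx i < S k)%nat -> comb a i = x i).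
  { intros a Ha Ea i Hi.
    destruct (Nat.eq_dec (idx i) k) as [e|ne].
    - assert (i = ik) by (apply idx_inj; rewrite Hik; exact e). subst i.
      destruct (Hcomb a Ha) as [_ [h _]]; exact h.
    - assert (Hi' : (idx i < k)%nat) by lia.
      unfold comb. rewrite (Ea i Hi'). unfold P; rewrite (XW (S k) i HkS Hi'). ring. }
  assert (Hw0ik : -1/2 <= w0 ik <= 1/2) by (apply R0; rewrite Hik; lia).
  assert (HWik : forall j, (S k < j <= d)%nat -> -1/2 <= W j ik <= 1/2).
  { intros j Hj. apply RW; [lia | rewrite Hik; lia | rewrite Hik; lia]. }
  assert (HPr : forall i, (S k <= idx i)%nat -> -1/2 <= P i <= 1/2).
  { intros i Hi. apply RW; [exact HkS | lia | lia]. }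
  exists (comb w0), (fun j => comb (W j)).
  split; [|split; [|split; [|split; [|split; [|split]]]]].
  - apply HC; [exact C0 | exact Hw0ik].
  - intros j Hj. apply HC; [apply CW; lia | apply HWik; exact Hj].
  - apply Hlt; [exact Hw0ik | exact X0].
  - intros j i Hj Hi. apply Hlt; [apply HWik; exact Hj | | exact Hi].
    intros i' Hi'. apply XW; [lia | exact Hi'].
  - intros i Hi. destruct (Hcomb w0 Hw0ik) as [Ht _]. unfold comb.
    apply cc_range; [exact Ht | apply R0; lia | apply HPr; exact Hi].
  - intros j i Hj Hi Hne. destruct (Hcomb (W j) (HWik j Hj)) as [Ht _]. unfold comb.
    apply cc_range; [exact Ht | apply RW; lia | apply HPr; exact Hi].
  - intros j i Hj He. destruct (Hcomb (W j) (HWik j Hj)) as [Ht [_ Hb]].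
    assert (Wm : lo k <= W j i) by (apply MW; [lia | exact He]).
    assert (Pi : -1/2 <= P i <= 1/2) by (apply HPr; lia).
    rewrite lo_S. unfold comb.
    replace (1 - (1 - tt (W j))) with (tt (W j)) by ring.
    set (t := tt (W j)) in *.
    assert ((1 - t) * W j i >= (1 - t) * lo k) by (apply Rmult_ge_compat_l; lra).
    assert (t * P i >= - t / 2) by nra.
    nra.
Qed.

Lemma reach : forall k, (k <= d)%nat -> forall w0 W, Inv 0 w0 W ->
  exists w0' W', Inv k w0' W'.
Proof.
  induction k as [|k IH]; intros Hk w0 W H0.
  - exists w0, W; exact H0.
  - destruct (IH ltac:(lia) w0 W H0) as [w1 [W1 H1]].
    exact (step k w1 W1 ltac:(lia) H1).
Qed.

Lemma final w0 W : Inv d w0 W -> C x.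
Proof.
  intros [C0 [_ [X0 _]]].
  assert (E : w0 = x).
  { apply functional_extensionality_dep. intros i. apply X0. apply idx_lt. }
  rewrite <- E; exact C0.
Qed.

End geom.

Notation MU := (@MC.MU).
Notation mu_ac_S := (@MC.mu_ac_S).
Notation mu_pos_S := (@MC.mu_pos_S).
Notation mu_full_S := (@MC.mu_full_S).

Theorem mainTheorem8 (d k : nat) (alpha : R) :
  (1 <= d)%nat -> (d + 2 <= k)%nat -> 0 < alpha < 1 ->
  exists mu : nat -> rset d -> R,
    (forall j, (j < k)%nat -> ac_probability_measure (mu j)) /\
    ~ (exists C : rset d, convex C /\
         forall j, (j < k)%nat -> mu j C = alpha).
Proof.
  intros Hd Hk Ha.
  set (L := LL d).
  set (vert := fun j : nat => (fun i : Fin.t d => if Nat.eqb (S (idx d i)) j then L else 0) : point d).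
  set (cen := (fun _ : Fin.t d => 1) : point d).
  exists (fun j => if Nat.leb j d then MU d (vert j) (1/2) else MU d cen 1).
  split.
  - intros j _. destruct (Nat.leb j d); apply mu_ac_S; lra.
  - intros [C [Cc HC]].
    assert (Hv : forall j, exists y : point d, (j <= d)%nat ->
               C y /\ forall i, vert j i <= y i <= vert j i + 1/2).
    { intros j. destruct (le_lt_dec j d) as [h|h].
      - assert (HCj := HC j ltac:(lia)). simpl in HCj.
        rewrite ((proj2 (Nat.leb_le j d)) h) in HCj.
        destruct (mu_pos_S d (vert j) (1/2) C ltac:(lra) ltac:(rewrite HCj; lra)) as [y Hy].
        exists y; intros _; exact Hy.
      - exists cen; intros; lia. }
    set (Q := fun j => proj1_sig (constructive_indefinite_description _ (Hv j))).
    assert (HQ : forall j, (j <= d)%nat -> C (Q j) /\ forall i, vert j i <= Q j i <= vert j i + 1/2).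
    { intros j hj. exact (proj2_sig (constructive_indefinite_description _ (Hv j)) hj). }
    assert (Cx : forall x : point d, (forall i, 1 <= x i <= 2) -> C x).
    { intros x Hx.
      assert (H0 : Inv d C x 0%nat (Q 0%nat) Q).
      { split; [|split; [|split; [|split; [|split; [|split]]]]].
        - apply HQ; lia.
        - intros j Hj; apply HQ; lia.
        - intros i Hi; lia.
        - intros j i _ Hi; lia.
        - intros i _. destruct (HQ 0%nat ltac:(lia)) as [_ Hb]. specialize (Hb i).
          unfold vert in Hb. simpl in Hb. lra.
        - intros j i Hj _ Hne. destruct (HQ j ltac:(lia)) as [_ Hb]. specialize (Hb i).
          unfold vert in Hb. rewrite (proj2 (Nat.eqb_neq _ _) Hne) in Hb. lra.
        - intros j i Hj He. destruct (HQ j ltac:(lia)) as [_ Hb]. specialize (Hb i).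
          unfold vert in Hb. rewrite (proj2 (Nat.eqb_eq _ _) He) in Hb.
          unfold lo; simpl. fold L. lra. }
      destruct (reach d C Cc x Hx d (le_n d) (Q 0%nat) Q H0) as [w0 [W HW]].
      exact (final d C x w0 W HW). }
    assert (HCd := HC (S d) ltac:(lia)).
    assert (E : Nat.leb (S d) d = false) by (apply Nat.leb_gt; lia).
    rewrite E in HCd.
    rewrite (mu_full_S d cen 1 C ltac:(lra)) in HCd.
    + lra.
    + intros y Hy. apply Cx. intros i. specialize (Hy i). unfold cen in Hy. lra.
Qed.
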